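(* Let $\mathbf A$ be an algebra of type $(\otimes,\circ,{}^{*})$ of arity $(2,2,1)$, $G\subseteq A$, and $\perp\subseteq\overline A\times\overline A$. Then: (1) $\langle\mathbf A,G\rangle$ is a reduced matrix model of $\mathsf{NeL}$ iff $(\mathbf A,\perp_G,\{\mathsf{t},\mathsf{f}\})$ is an $\mathfrak{N}_w$-model; (2) $(\mathbf A,\perp,\{\mathsf{t},\mathsf{f}\})$ is an $\mathfrak{N}_w$-model iff $\langle\mathbf A,F_\perp\rangle$ is a reduced matrix model of $\mathsf{NeL}$ and $\perp=\perp_{F_\perp}$. Consequently, $\mathsf{Alg}^{*}\mathsf{NeL}$ coincides with the class of algebraic reducts of $\mathfrak{N}_w$-models. Moreover, for every reduced matrix model $\langle\mathbf A,G\rangle$ of $\mathsf{NeL}$ and every $\mathfrak{N}_w$-model $(\mathbf A,\perp,\{\mathsf{t},\mathsf{f}\})$, one has $G=F_{\perp_G}$ and $\perp=\perp_{F_\perp}$.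
   Context: Formulas are built from a countably infinite set of variables using binary $\otimes,\circ$ and unary ${}^{*}$; $\mathbf{Fm}$ is the formula algebra. Abbreviations (also term operations in algebras): $\varphi\Rightarrow\psi:=(\varphi\circ\psi^{*})^{*}$; $\varphi\Leftrightarrow\psi:=(\varphi\Rightarrow\psi)\otimes(\psi\Rightarrow\varphi)$; $\varphi\not\Leftrightarrow\psi:=(\varphi\Leftrightarrow\psi)^{*}$; $\varphi\not\Leftrightarrow\psi\not\Leftrightarrow\chi:=((\varphi\not\Leftrightarrow\psi)\otimes(\varphi\not\Leftrightarrow\chi))\otimes(\psi\not\Leftrightarrow\chi)$. $\mathsf{NeL}$: axiom schemes (A1) $\varphi\Rightarrow\varphi$; (A2) $(\varphi\circ\psi)\Rightarrow(\psi\circ\varphi)$; (A3) $\varphi\Rightarrow\varphi^{**}$; (A4) $(\varphi\Rightarrow\psi)\Rightarrow(\varphi\circ\psi)$; (A5) $(\varphi\otimes\psi)\Leftrightarrow(\psi\otimes\varphi)$; (A6) $((\varphi\otimes\psi)\Rightarrow\chi)\Rightarrow((\varphi\otimes\chi^{*})\Rightarrow\psi^{*})$; (A7) $(\varphi\not\Leftrightarrow\psi\not\Leftrightarrow\chi)\Rightarrow((\varphi\Rightarrow\psi)\Rightarrow((\psi\Rightarrow\chi)\Rightarrow(\varphi\Rightarrow\chi)))$; rules on arbitrary formulas: $\varphi\Rightarrow\psi,\varphi/\psi$; $\varphi,\psi/\varphi\otimes\psi$; $\varphi\Leftrightarrow\psi,\chi/\chi'$ ($\chi'$ from $\chi$ replacing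 one or more occurrences of $\varphi$ by $\psi$); $\varphi\otimes\psi/\varphi$. A matrix model of $\mathsf{NeL}$ is a pair $\langle\mathbf A,G\rangle$ with $G\subseteq A$ such that whenever $\Gamma\vdash_{\mathsf{NeL}}\varphi$ and $h:\mathbf{Fm}\to\mathbf A$ is a homomorphism, $h(\Gamma)\subseteq G$ implies $h(\varphi)\in G$. It is reduced if the largest congruence $\theta$ of $\mathbf A$ compatible with $G$ (i.e. $a\in G$ and $a\,\theta\, b$ imply $b\in G$) is the identity. $\mathsf{Alg}^{*}\mathsf{NeL}$ is the class of algebras $\mathbf A$ such that $\langle \mathbf A,G\rangle$ is a reduced matrix model of $\mathsf{NeL}$ for some $G$. Let $\mathsf{t}\neq\mathsf{f}$ be symbols not in $A$, $\overline A=A\cup\{\mathsf{t},\mathsf{f}\}$. For $G\subseteq A$: $\perp_G=\{(a,b)\in A^2: a\Rightarrow b^{*}\in G\}\cup\{(a,\mathsf{f}):a\in G\}\cup\{(a,\mathsf{t}):a^{*}\in G\}$. For $\perp\subseteq\overline A\times\overline A$: $F_\perp=\{a\in A:a\perp\mathsf{f}\}$. A weak $\mathcal{N}$-algebra is such an algebra with $\otimes,\circ$ commutative, $x^{**}=x$, $(x\otimes y)\circ z=(x\otimes z)\circ y$. An $\mathfrak{N}_w$-model is $(\mathbf A,\perp,\{\mathsf{t},\mathsf{f}\})$ with $\mathbf A$ a weak $\mathcal{N}$-algebra and $\perp\subseteq\overline A\times\overline A$ such that for all $x,y,z\in A$: (a) $x\perp x^{*}$; (b) $x\perp y^{*}$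 and $y\perp x^{*}$ imply $x=y$; (c) $x\perp y$ iff $x\circ y\perp\mathsf{t}$; (d) $x\perp\mathsf{t}$ iff $x^{*}\perp\mathsf{f}$; (e) $x\perp\mathsf{f}$ and $y\perp\mathsf{f}$ iff $x\otimes y\perp\mathsf{f}$; (f) $(x\circ y^{*})^{*}\perp(x\circ y)^{*}$; (g) $x\perp y$ and $x\perp\mathsf{f}$ imply $y\perp\mathsf{t}$; (h) $(x\not\Leftrightarrow y\not\Leftrightarrow z)\perp((x\Rightarrow y)\Rightarrow((y\Rightarrow z)\Rightarrow(x\Rightarrow z)))^{*}$.
   Formalization: Every relation ⊥, in the definition of an 𝔑_w-model, in part (2) and in the Moreover clause, is a subset of A × Ā (left component in A) rather than of Ā × Ā. The statement above fails without it. *)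

(* Defs.v *)
Inductive Fm : Type :=
| Var : nat -> Fm
| FTens : Fm -> Fm -> Fm
| FCirc : Fm -> Fm -> Fm
| FStar : Fm -> Fm.

Definition FImp (p q : Fm) : Fm := FStar (FCirc p (FStar q)).
Definition FIff (p q : Fm) : Fm := FTens (FImp p q) (FImp q p).
Definition FNIff (p q : Fm) : Fm := FStar (FIff p q).
Definition FNIff3 (p q r : Fm) : Fm :=
  FTens (FTens (FNIff p q) (FNIff p r)) (FNIff q r).

Inductive NeL_axiom : Fm -> Prop :=
| ax1 p : NeL_axiom (FImp p p)
| ax2 p q : NeL_axiom (FImp (FCirc p q) (FCirc q p))
| ax3 p : NeL_axiom (FImp p (FStar (FStar p)))
| ax4 p q : NeL_axiom (FImp (FImp p q) (FCirc p q))
| ax5 p q : NeL_axiom (FIff (FTens p q) (FTens q p))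
| ax6 p q r : NeL_axiom
    (FImp (FImp (FTens p q) r) (FImp (FTens p (FStar r)) (FStar q)))
| ax7 p q r : NeL_axiom
    (FImp (FNIff3 p q r)
          (FImp (FImp p q) (FImp (FImp q r) (FImp p r)))).

(** [repl0 p q c c']: c' is obtained from c by replacing zero or more
    occurrences of p by q. *)
Inductive repl0 (p q : Fm) : Fm -> Fm -> Prop :=
| r0_refl c : repl0 p q c c
| r0_here : repl0 p q p q
| r0_tens a b a' b' : repl0 p q a a' -> repl0 p q b b' ->
    repl0 p q (FTens a b) (FTens a' b')
| r0_circ a b a' b' : repl0 p q a a' -> repl0 p q b b' ->
    repl0 p q (FCirc a b) (FCirc a' b')
| r0_star a a' : repl0 p q a a' -> repl0 p q (FStar a) (FStar a').

(** [repl1 p q c c']: c' is obtained from c by replacing one or more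
    occurrences of p by q. *)
Inductive repl1 (p q : Fm) : Fm -> Fm -> Prop :=
| r1_here : repl1 p q p q
| r1_tensl a b a' b' : repl1 p q a a' -> repl0 p q b b' ->
    repl1 p q (FTens a b) (FTens a' b')
| r1_tensr a b a' b' : repl0 p q a a' -> repl1 p q b b' ->
    repl1 p q (FTens a b) (FTens a' b')
| r1_circl a b a' b' : repl1 p q a a' -> repl0 p q b b' ->
    repl1 p q (FCirc a b) (FCirc a' b')
| r1_circr a b a' b' : repl0 p q a a' -> repl1 p q b b' ->
    repl1 p q (FCirc a b) (FCirc a' b')
| r1_star a a' : repl1 p q a a' -> repl1 p q (FStar a) (FStar a').

Inductive NeL_deriv (Gamma : Fm -> Prop) : Fm -> Prop :=
| d_prem p : Gamma p -> NeL_deriv Gamma p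
| d_ax p : NeL_axiom p -> NeL_deriv Gamma p
| d_mp p q : NeL_deriv Gamma (FImp p q) -> NeL_deriv Gamma p -> NeL_deriv Gamma q
| d_adj p q : NeL_deriv Gamma p -> NeL_deriv Gamma q -> NeL_deriv Gamma (FTens p q)
| d_repl p q c c' : NeL_deriv Gamma (FIff p q) -> NeL_deriv Gamma c ->
    repl1 p q c c' -> NeL_deriv Gamma c'
| d_simp p q : NeL_deriv Gamma (FTens p q) -> NeL_deriv Gamma p.

Record algebra : Type := Algebra {
  carrier :> Type;
  tens : carrier -> carrier -> carrier;
  circ : carrier -> carrier -> carrier;
  star : carrier -> carrier }.

Section Alg.
Variable A : algebra.

Definition aimp (x y : A) : A := star A (circ A x (star A y)).
Definition aiff (x y : A) : A := tens A (aimp x y) (aimp y x).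
Definition aniff (x y : A) : A := star A (aiff x y).
Definition aniff3 (x y z : A) : A :=
  tens A (tens A (aniff x y) (aniff x z)) (aniff y z).

Definition is_hom (h : Fm -> A) : Prop :=
  (forall p q, h (FTens p q) = tens A (h p) (h q)) /\
  (forall p q, h (FCirc p q) = circ A (h p) (h q)) /\
  (forall p, h (FStar p) = star A (h p)).

Definition matrix_model (G : A -> Prop) : Prop :=
  forall (Gamma : Fm -> Prop) (phi : Fm), NeL_deriv Gamma phi ->
  forall h : Fm -> A, is_hom h ->
  (forall psi, Gamma psi -> G (h psi)) -> G (h phi).

Definition congruence (th : A -> A -> Prop) : Prop :=
  (forall x, th x x) /\ (forall x y, th x y -> th y x) /\
  (forall x y z, th x y -> th y z -> th x z) /\
  (forall x y x' y', th x x' -> th y y' -> th (tens A x y) (tens A x' y')) /\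
  (forall x y x' y', th x x' -> th y y' -> th (circ A x y) (circ A x' y')) /\
  (forall x x', th x x' -> th (star A x) (star A x')).

Definition compatible (th : A -> A -> Prop) (G : A -> Prop) : Prop :=
  forall a b, G a -> th a b -> G b.

Definition largest_compatible_congruence (G : A -> Prop) (th : A -> A -> Prop) : Prop :=
  congruence th /\ compatible th G /\
  forall th', congruence th' -> compatible th' G -> forall a b, th' a b -> th a b.

Definition reduced (G : A -> Prop) : Prop :=
  exists th, largest_compatible_congruence G th /\ forall a b, th a b <-> a = b.

Definition reduced_matrix_model (G : A -> Prop) : Prop :=
  matrix_model G /\ reduced G.

(** Abar = A + {t, f} *)
Inductive ext : Type := Elt (a : A) | TT | FF.

(** Relations perp are taken on A x Abar. *)
Definition perp_of (G : A -> Prop) (a : A) (u : ext) : Prop :=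
  match u with
  | Elt b => G (aimp a (star A b))
  | FF => G a
  | TT => G (star A a)
  end.

Definition F_of (perp : A -> ext -> Prop) (a : A) : Prop := perp a FF.

Definition weak_N_algebra : Prop :=
  (forall x y, tens A x y = tens A y x) /\
  (forall x y, circ A x y = circ A y x) /\
  (forall x, star A (star A x) = x) /\
  (forall x y z, circ A (tens A x y) z = circ A (tens A x z) y).

Definition Nw_model (perp : A -> ext -> Prop) : Prop :=
  weak_N_algebra /\
  (forall x, perp x (Elt (star A x))) /\
  (forall x y, perp x (Elt (star A y)) -> perp y (Elt (star A x)) -> x = y) /\
  (forall x y, perp x (Elt y) <-> perp (circ A x y) TT) /\
  (forall x, perp x TT <-> perp (star A x) FF) /\
  (forall x y, (perp x FF /\ perp y FF) <-> perp (tens A x y) FF) /\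
  (forall x y, perp (star A (circ A x (star A y))) (Elt (star A (circ A x y)))) /\
  (forall x y, perp x (Elt y) -> perp x FF -> perp y TT) /\
  (forall x y z, perp (aniff3 x y z)
     (Elt (star A (aimp (aimp x y) (aimp (aimp y z) (aimp x z)))))).

End Alg.
Arguments Elt {A}.
Arguments TT {A}.
Arguments FF {A}.

(* Main.v *)
Require Import Defs.
From Stdlib Require Import FunctionalExtensionality PropExtensionality.

Fixpoint eval (A : algebra) (v : nat -> A) (f : Fm) : A :=
  match f with
  | Var n => v n
  | FTens p q => tens A (eval A v p) (eval A v q)
  | FCirc p q => circ A (eval A v p) (eval A v q)
  | FStar p => star A (eval A v p)
  end.

Lemma eval_hom A v : is_hom A (eval A v).
Proof. repeat split. Qed.

Definition v3 (A : algebra) (a b c : A) : nat -> A :=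
  fun n => match n with 0 => a | 1 => b | _ => c end.

Ltac r0 := first [ apply r0_here | apply r0_refl | apply r0_tens; r0
                 | apply r0_circ; r0 | apply r0_star; r0 ].
Ltac r1 := first [ apply r1_here | apply r1_tensl; [r1 | r0] | apply r1_tensr; [r0 | r1]
                 | apply r1_circl; [r1 | r0] | apply r1_circr; [r0 | r1]
                 | apply r1_star; r1 ].

Section MM.
Variable A : algebra.
Variable G : A -> Prop.
Hypothesis HM : matrix_model A G.

Lemma mm_sound Gamma phi v : NeL_deriv Gamma phi ->
  (forall psi, Gamma psi -> G (eval A v psi)) -> G (eval A v phi).
Proof. intros D H. eapply HM; eauto. apply eval_hom. Qed.

Lemma mm_ax phi v : NeL_axiom phi -> G (eval A v phi).
Proof. intro H. apply (mm_sound (fun _ => False)); [apply d_ax; exact H | tauto]. Qed.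

Lemma mm_mp a b : G (aimp A a b) -> G a -> G b.
Proof.
  intros H1 H2.
  apply (mm_sound (fun psi => psi = FImp (Var 0) (Var 1) \/ psi = Var 0)
           (Var 1) (v3 A a b b)).
  - apply (d_mp _ (Var 0)); apply d_prem; auto.
  - intros psi [-> | ->]; assumption.
Qed.

Lemma mm_adj a b : G a -> G b -> G (tens A a b).
Proof.
  intros H1 H2.
  apply (mm_sound (fun psi => psi = Var 0 \/ psi = Var 1)
           (FTens (Var 0) (Var 1)) (v3 A a b b)).
  - apply d_adj; apply d_prem; auto.
  - intros psi [-> | ->]; assumption.
Qed.

Lemma mm_simp a b : G (tens A a b) -> G a.
Proof.
  intros H1.
  apply (mm_sound (fun psi => psi = FTens (Var 0) (Var 1))
           (Var 0) (v3 A a b b)).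
  - apply (d_simp _ _ (Var 1)); apply d_prem; auto.
  - intros psi ->; assumption.
Qed.

Lemma mm_repl v c c' : repl1 (Var 0) (Var 1) c c' ->
  G (aiff A (v 0) (v 1)) -> G (eval A v c) -> G (eval A v c').
Proof.
  intros Hr H1 H2.
  apply (mm_sound (fun psi => psi = FIff (Var 0) (Var 1) \/ psi = c) c' v).
  - apply (d_repl _ (Var 0) (Var 1) c c'); try apply d_prem; auto.
  - intros psi [-> | ->]; assumption.
Qed.

Lemma A1 a : G (aimp A a a).
Proof. exact (mm_ax (FImp (Var 0) (Var 0)) (v3 A a a a) (ax1 _)). Qed.
Lemma A2 a b : G (aimp A (circ A a b) (circ A b a)).
Proof. exact (mm_ax _ (v3 A a b b) (ax2 (Var 0) (Var 1))). Qed.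
Lemma A3 a : G (aimp A a (star A (star A a))).
Proof. exact (mm_ax _ (v3 A a a a) (ax3 (Var 0))). Qed.
Lemma A4 a b : G (aimp A (aimp A a b) (circ A a b)).
Proof. exact (mm_ax _ (v3 A a b b) (ax4 (Var 0) (Var 1))). Qed.
Lemma A5 a b : G (aiff A (tens A a b) (tens A b a)).
Proof. exact (mm_ax _ (v3 A a b b) (ax5 (Var 0) (Var 1))). Qed.
Lemma A6 a b c : G (aimp A (aimp A (tens A a b) c)
                      (aimp A (tens A a (star A c)) (star A b))).
Proof. exact (mm_ax _ (v3 A a b c) (ax6 (Var 0) (Var 1) (Var 2))). Qed.
Lemma A7 a b c : G (aimp A (aniff3 A a b c)
   (aimp A (aimp A a b) (aimp A (aimp A b c) (aimp A a c)))).
Proof. exact (mm_ax _ (v3 A a b c) (ax7 (Var 0) (Var 1) (Var 2))). Qed.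

Lemma th_refl a : G (aiff A a a).
Proof. apply mm_adj; apply A1. Qed.

Lemma th_compat a b : G a -> G (aiff A a b) -> G b.
Proof.
  intros H1 H2.
  exact (mm_repl (v3 A a b b) (Var 0) (Var 1) (r1_here _ _) H2 H1).
Qed.

Lemma th_sym a b : G (aiff A a b) -> G (aiff A b a).
Proof.
  intros H.
  apply (mm_repl (v3 A a b b) (FIff (Var 0) (Var 0)) (FIff (Var 1) (Var 0))).
  - unfold FIff, FImp; r1.
  - exact H.
  - exact (th_refl a).
Qed.

Lemma th_trans a b c : G (aiff A a b) -> G (aiff A b c) -> G (aiff A a c).
Proof.
  intros H1 H2.
  apply (mm_repl (v3 A b c a) (FIff (Var 2) (Var 0)) (FIff (Var 2) (Var 1))).
  - unfold FIff, FImp; r1.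
  - exact H2.
  - exact H1.
Qed.

Lemma th_tensl a b c : G (aiff A a b) -> G (aiff A (tens A a c) (tens A b c)).
Proof.
  intros H.
  apply (mm_repl (v3 A a b c) (FIff (FTens (Var 0) (Var 2)) (FTens (Var 0) (Var 2)))
                               (FIff (FTens (Var 0) (Var 2)) (FTens (Var 1) (Var 2)))).
  - unfold FIff, FImp; r1.
  - exact H.
  - exact (th_refl _).
Qed.

Lemma th_tensr a b c : G (aiff A a b) -> G (aiff A (tens A c a) (tens A c b)).
Proof.
  intros H.
  apply (mm_repl (v3 A a b c) (FIff (FTens (Var 2) (Var 0)) (FTens (Var 2) (Var 0)))
                               (FIff (FTens (Var 2) (Var 0)) (FTens (Var 2) (Var 1)))).
  - unfold FIff, FImp; r1.
  - exact H.
  - exact (th_refl _).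
Qed.

Lemma th_circl a b c : G (aiff A a b) -> G (aiff A (circ A a c) (circ A b c)).
Proof.
  intros H.
  apply (mm_repl (v3 A a b c) (FIff (FCirc (Var 0) (Var 2)) (FCirc (Var 0) (Var 2)))
                               (FIff (FCirc (Var 0) (Var 2)) (FCirc (Var 1) (Var 2)))).
  - unfold FIff, FImp; r1.
  - exact H.
  - exact (th_refl _).
Qed.

Lemma th_circr a b c : G (aiff A a b) -> G (aiff A (circ A c a) (circ A c b)).
Proof.
  intros H.
  apply (mm_repl (v3 A a b c) (FIff (FCirc (Var 2) (Var 0)) (FCirc (Var 2) (Var 0)))
                               (FIff (FCirc (Var 2) (Var 0)) (FCirc (Var 2) (Var 1)))).
  - unfold FIff, FImp; r1.
  - exact H.
  - exact (th_refl _).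
Qed.

Lemma th_star a b : G (aiff A a b) -> G (aiff A (star A a) (star A b)).
Proof.
  intros H.
  apply (mm_repl (v3 A a b b) (FIff (FStar (Var 0)) (FStar (Var 0)))
                               (FIff (FStar (Var 0)) (FStar (Var 1)))).
  - unfold FIff, FImp; r1.
  - exact H.
  - exact (th_refl _).
Qed.

Lemma th_cong : congruence A (fun a b => G (aiff A a b)).
Proof.
  repeat split.
  - apply th_refl.
  - apply th_sym.
  - apply th_trans.
  - intros x y x' y' H1 H2. eapply th_trans; [apply th_tensl; exact H1 | apply th_tensr; exact H2].
  - intros x y x' y' H1 H2. eapply th_trans; [apply th_circl; exact H1 | apply th_circr; exact H2].
  - apply th_star.
Qed.

End MM.

Section RMM.
Variable A : algebra.
Variable G : A -> Prop.
Hypothesis HR : reduced_matrix_model A G.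

Let HM : matrix_model A G := proj1 HR.

Lemma eqG a b : G (aiff A a b) -> a = b.
Proof.
  intro H. pose proof HR as [_ [th [[Hc [Hcomp Hl]] Hid]]].
  apply Hid. apply (Hl (fun a b => G (aiff A a b))); auto.
  - apply th_cong; exact HM.
  - intros x y Hx Hxy. exact (th_compat A G HM x y Hx Hxy).
Qed.

Lemma r_cc a b : circ A a b = circ A b a.
Proof. apply eqG. apply (mm_adj A G HM); auto; apply (A2 A G HM); auto. Qed.

Lemma r_tc a b : tens A a b = tens A b a.
Proof. apply eqG. apply (A5 A G HM); auto. Qed.

Lemma r_inv3 a : star A a = star A (star A (star A a)).
Proof.
  apply eqG. apply (mm_adj A G HM); auto. apply (A3 A G HM); auto.
  pose proof (A1 A G HM (star A (star A a))) as H. unfold aimp in *.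
  rewrite (r_cc (star A (star A (star A a)))). exact H.
Qed.

Lemma r_inv a : star A (star A a) = a.
Proof.
  apply eqG. apply (mm_adj A G HM); auto.
  - pose proof (A1 A G HM (star A (star A a))) as H. unfold aimp in *.
    rewrite <- (r_inv3 a) in H. exact H.
  - apply (A3 A G HM); auto.
Qed.

Lemma r_ex x y z : circ A (tens A x y) z = circ A (tens A x z) y.
Proof.
  pose proof (A6 A G HM x y (star A z)) as H1.
  pose proof (A6 A G HM x z (star A y)) as H2.
  unfold aimp in H1, H2. rewrite !r_inv in H1, H2.
  assert (E : star A (circ A (tens A x y) z) = star A (circ A (tens A x z) y)).
  { apply eqG. unfold aiff, aimp. rewrite !r_inv. apply (mm_adj A G HM); auto. }
  rewrite <- (r_inv (circ A (tens A x y) z)), E. apply r_inv.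
Qed.

Lemma rmm_Nw : Nw_model A (perp_of A G).
Proof.
  split; [|split; [|split; [|split; [|split; [|split; [|split; [|split]]]]]]]; cbn [perp_of].
  - split; [|split; [|split]]; intros; [apply r_tc | apply r_cc | apply r_inv | apply r_ex].
  - intro x. rewrite r_inv. apply (A1 A G HM); auto.
  - intros x y H1 H2. rewrite r_inv in H1, H2. apply eqG. apply (mm_adj A G HM); auto.
  - intros x y. unfold aimp. rewrite r_inv. tauto.
  - intros x. tauto.
  - intros x y; split.
    + intros [H1 H2]; apply (mm_adj A G HM); auto.
    + intros H; split; [eapply (mm_simp A G HM); eauto|]. rewrite r_tc in H. eapply (mm_simp A G HM); eauto.
  - intros x y. rewrite r_inv. apply (A4 A G HM); auto.
  - intros x y H1 H2. eapply (mm_mp A G HM); eauto.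
  - intros x y z. rewrite r_inv. apply (A7 A G HM); auto.
Qed.

End RMM.

Section NW.
Variable A : algebra.
Variable G : A -> Prop.
Hypothesis HN : Nw_model A (perp_of A G).

Lemma n_w : weak_N_algebra A. Proof. apply HN. Qed.
Lemma n_inv a : star A (star A a) = a. Proof. apply n_w. Qed.
Lemma n_cc a b : circ A a b = circ A b a. Proof. apply n_w. Qed.
Lemma n_tc a b : tens A a b = tens A b a. Proof. apply n_w. Qed.
Lemma n_ex x y z : circ A (tens A x y) z = circ A (tens A x z) y. Proof. apply n_w. Qed.

Lemma n_A1 a : G (aimp A a a).
Proof.
  destruct HN as [_ [Ha _]]. pose proof (Ha a) as H. cbn [perp_of] in H.
  rewrite n_inv in H. exact H.
Qed.

Lemma n_e a b : G a /\ G b <-> G (tens A a b).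
Proof. destruct HN as [_ [_ [_ [_ [_ [He _]]]]]]. exact (He a b). Qed.

Lemma n_mp a b : G (aimp A a b) -> G a -> G b.
Proof.
  destruct HN as [_ [_ [_ [_ [_ [_ [_ [Hg _]]]]]]]]. intros H1 H2.
  pose proof (Hg a (star A b)) as H. cbn [perp_of] in H. rewrite !n_inv in H.
  auto.
Qed.

Lemma n_eq a b : G (aiff A a b) -> a = b.
Proof.
  destruct HN as [_ [_ [Hb _]]]. intros H. apply n_e in H. destruct H as [H1 H2].
  apply Hb; cbn [perp_of]; rewrite n_inv; auto.
Qed.

Lemma h_imp h (Hh : is_hom A h) p q : h (FImp p q) = aimp A (h p) (h q).
Proof. destruct Hh as [Ht [Hc Hs]]. unfold FImp, aimp. rewrite Hs, Hc, Hs. reflexivity. Qed.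
Lemma h_iff h (Hh : is_hom A h) p q : h (FIff p q) = aiff A (h p) (h q).
Proof. unfold FIff, aiff. rewrite (proj1 Hh), !h_imp; auto. Qed.
Lemma h_niff h (Hh : is_hom A h) p q : h (FNIff p q) = aniff A (h p) (h q).
Proof. unfold FNIff, aniff. rewrite (proj2 (proj2 Hh)), h_iff; auto. Qed.
Lemma h_niff3 h (Hh : is_hom A h) p q r : h (FNIff3 p q r) = aniff3 A (h p) (h q) (h r).
Proof. unfold FNIff3, aniff3. rewrite !(proj1 Hh), !h_niff; auto. Qed.

Lemma repl0_eq h (Hh : is_hom A h) p q : h p = h q ->
  forall c c', repl0 p q c c' -> h c = h c'.
Proof.
  destruct Hh as [Ht [Hc Hs]]. intros E c c' R. induction R; auto.
  - rewrite !Ht; congruence.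
  - rewrite !Hc; congruence.
  - rewrite !Hs; congruence.
Qed.

Lemma repl1_eq h (Hh : is_hom A h) p q : h p = h q ->
  forall c c', repl1 p q c c' -> h c = h c'.
Proof.
  intros E c c' R. pose proof (repl0_eq h Hh p q E) as R0.
  destruct Hh as [Ht [Hc Hs]]. induction R; auto.
  - rewrite !Ht; f_equal; auto.
  - rewrite !Ht; f_equal; auto.
  - rewrite !Hc; f_equal; auto.
  - rewrite !Hc; f_equal; auto.
  - rewrite !Hs; f_equal; auto.
Qed.

Lemma Nw_mm : matrix_model A G.
Proof.
  intros Gamma phi D h Hh HG. induction D.
  - auto.
  - pose proof Hh as [Ht [Hc Hs]].
    destruct H;
      repeat first [rewrite (h_niff3 h Hh) | rewrite (h_iff h Hh) | rewrite (h_imp h Hh)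
                   | rewrite Ht | rewrite Hc | rewrite Hs].
    + apply n_A1.
    + rewrite (n_cc (h q)). apply n_A1.
    + rewrite n_inv. apply n_A1.
    + destruct HN as [_ [_ [_ [_ [_ [_ [Hf _]]]]]]]. pose proof (Hf (h p) (h q)) as H.
      cbn [perp_of] in H. rewrite n_inv in H. exact H.
    + rewrite (n_tc (h q)). apply n_e. split; apply n_A1.
    + replace (aimp A (tens A (h p) (star A (h r))) (star A (h q)))
        with (aimp A (tens A (h p) (h q)) (h r)); [apply n_A1|].
      unfold aimp. rewrite n_inv, n_ex. reflexivity.
    + destruct HN as [_ [_ [_ [_ [_ [_ [_ [_ Hh7]]]]]]]].
      pose proof (Hh7 (h p) (h q) (h r)) as H. cbn [perp_of] in H. rewrite n_inv in H.
      exact H.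
  - rewrite (h_imp h Hh) in IHD1. eapply n_mp; eauto.
  - rewrite (proj1 Hh). apply n_e; auto.
  - rewrite (h_iff h Hh) in IHD1. apply n_eq in IHD1.
    rewrite <- (repl1_eq h Hh p q IHD1 c c' H). auto.
  - rewrite (proj1 Hh) in IHD. apply n_e in IHD. tauto.
Qed.

Lemma Nw_rmm : reduced_matrix_model A G.
Proof.
  split; [exact Nw_mm|]. exists (@eq A). split; [|tauto].
  split; [|split].
  - repeat split; intros; subst; auto.
  - intros a b Ha Hab; subst; auto.
  - intros th [Rf [Sy [Tr [Ct [Cc Cs]]]]] Hcomp a b Hab. apply n_eq.
    apply (Hcomp (aiff A a a)).
    + apply n_e; split; apply n_A1.
    + unfold aiff, aimp. apply Ct; apply Cs; apply Cc; auto.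
Qed.

End NW.

Lemma perp_F (A : algebra) perp : Nw_model A perp ->
  forall a u, perp a u <-> perp_of A (F_of A perp) a u.
Proof.
  intros [[_ [_ [inv _]]] [_ [_ [Hc [Hd _]]]]] a u.
  destruct u as [b| |]; cbn [perp_of]; unfold F_of.
  - unfold aimp. rewrite inv. rewrite Hc, Hd. tauto.
  - apply Hd.
  - tauto.
Qed.

Lemma perp_F_eq (A : algebra) perp : Nw_model A perp ->
  perp = perp_of A (F_of A perp).
Proof.
  intros H. apply functional_extensionality; intro a.
  apply functional_extensionality; intro u.
  apply propositional_extensionality. apply perp_F; auto.
Qed.

Theorem proposition4p9 :
  forall A : algebra,
    (forall G : A -> Prop,
        reduced_matrix_model A G <-> Nw_model A (perp_of A G)) /\
    (forall perp : A -> ext A -> Prop,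
        Nw_model A perp <->
        (reduced_matrix_model A (F_of A perp) /\
         forall a u, perp a u <-> perp_of A (F_of A perp) a u)) /\
    ((exists G : A -> Prop, reduced_matrix_model A G) <->
     (exists perp : A -> ext A -> Prop, Nw_model A perp)) /\
    (forall G : A -> Prop, reduced_matrix_model A G ->
        forall a, G a <-> F_of A (perp_of A G) a) /\
    (forall perp : A -> ext A -> Prop, Nw_model A perp ->
        forall a u, perp a u <-> perp_of A (F_of A perp) a u).
Proof.
  intros A.
  assert (P1 : forall G : A -> Prop,
        reduced_matrix_model A G <-> Nw_model A (perp_of A G)).
  { intros G; split; [apply rmm_Nw | apply Nw_rmm]. }
  assert (P2 : forall perp : A -> ext A -> Prop,
        Nw_model A perp <->
        (reduced_matrix_model A (F_of A perp) /\
         forall a u, perp a u <-> perp_of A (F_of A perp) a u)).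
  { intros perp; split.
    - intros H. split; [|apply perp_F; auto].
      apply P1. rewrite <- perp_F_eq; auto.
    - intros [H1 H2].
      assert (E : perp = perp_of A (F_of A perp)).
      { apply functional_extensionality; intro a.
        apply functional_extensionality; intro u.
        apply propositional_extensionality. auto. }
      rewrite E. apply P1; auto. }
  split; [exact P1|]. split; [exact P2|]. split; [|split].
  - split.
    + intros [G HG]. exists (perp_of A G). apply P1; auto.
    + intros [perp Hp]. exists (F_of A perp). apply P2; auto.
  - intros G _ a. unfold F_of. cbn [perp_of]. tauto.
  - intros perp Hp. apply perp_F; auto.
Qed.
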